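(* Let $s\ge2$, $\eta>0$, and let $z\in\mathbb{R}_{\ge0}^s$ with $\sum_j z_j>0$ whose non-zero entries are not all equal. Let $\tilde z_k=\max\big(z_k-\eta\frac{\partial\mathcal{H}}{\partial z_k}(z),0\big)$ (with $\tilde z_k=0$ when $z_k=0$). If $i$ is an index of a smallest non-zero entry of $z$ then $\frac{\partial\mathcal{H}}{\partial z_i}(z)>0$ and $\tilde z_i<z_i$; if $k$ is an index of a largest entry of $z$ then $\frac{\partial\mathcal{H}}{\partial z_k}(z)<0$ and $\tilde z_k>z_k$.
   Context: $\mathcal{H}(z)=-\sum_i \frac{z_i}{\sum_j z_j}\log\frac{z_i}{\sum_j z_j}$ with $0\log0=0$; for $z_k>0$ the gradient is the partial derivative, and for $z_k=0$ it is regarded as $+\infty$. *)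

(* Defs.v *)
From HB Require Import structures.
From mathcomp Require Import all_boot all_order all_algebra.
From mathcomp Require Import all_classical all_reals all_analysis.
Set Implicit Arguments. Unset Strict Implicit. Unset Printing Implicit Defensive.
Import Order.TTheory GRing.Theory Num.Theory.
Local Open Scope ring_scope.

Definition xlnx {R : realType} (x : R) : R := if x == 0 then 0 else x * ln x.

Definition entropyH {R : realType} {s : nat} (z : 'I_s -> R) : R :=
  - \sum_(i < s) xlnx (z i / \sum_(j < s) z j).

Definition dH {R : realType} {s : nat} (z : 'I_s -> R) (k : 'I_s) : R :=
  derive1 (fun t : R => entropyH (fun j => z j + (if j == k then t else 0))) 0.

Definition gradH {R : realType} {s : nat} (z : 'I_s -> R) (k : 'I_s) : \bar R :=
  if 0 < z k then (dH z k)%:E else +oo%E.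

Definition ztilde {R : realType} {s : nat} (eta : R) (z : 'I_s -> R) (k : 'I_s) : R :=
  if z k == 0 then 0 else Num.max (z k - eta * dH z k) 0.

(* Main.v *)
Require Import Defs.
From HB Require Import structures.
From mathcomp Require Import all_boot all_order all_algebra.
From mathcomp Require Import all_classical all_reals all_analysis.
From mathcomp Require Import ring lra.
Import Order.TTheory GRing.Theory Num.Theory.
Local Open Scope ring_scope.

Section S.
Variable R : realType.

Lemma xlnxE (x : R) : xlnx x = x * ln x.
Proof. by rewrite /xlnx; case: eqP => [->|]; rewrite ?mul0r. Qed.

Lemma is_derive_ext (f g : R -> R) (x v d : R) :
  (forall t, f t = g t) -> is_derive x v f d -> is_derive x v g d.
Proof. by move=> fg; have -> : f = g by apply/funext. Qed.

Lemma term_derive (a S : R) (c : R) : 0 < S -> 0 < a ->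
  is_derive (0:R) (1:R) (fun t : R => (a + c * t) / (S + t) * ln ((a + c * t) / (S + t)))
    ((ln (a / S) + 1) * ((c * S - a) / S ^+ 2)).
Proof.
move=> S0 a0.
have h1 : is_derive (0:R) (1:R) (cst a + c *: id) (0 + c *: (1:R)).
  apply: is_deriveD; apply: is_deriveZ.
have h2 : is_derive (0:R) (1:R) (cst S + id) (0 + (1:R)) by apply: is_deriveD.
have h3 := is_deriveV _ h2.
have : (cst S + id) (0:R) != 0.
  by change (S + 0 != 0); rewrite addr0 gt_eqF.
move=> /h3 {}h3.
have h4 := is_deriveM h1 h3.
set w := (_ * _)%R in h4.
have wE t : w t = (a + c * t) / (S + t) by [].
have w0 : 0 < w 0 by rewrite wE mulr0 addr0 addr0 divr_gt0.
have h5 := is_derive1_comp (is_derive1_ln w0) h4.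
have h6 := is_deriveM h4 h5.
have h7 : is_derive (0:R) (1:R) (w * (@ln R \o w)) ((ln (a / S) + 1) * ((c * S - a) / S ^+ 2)).
  apply: is_derive_eq h6 _.
  change (w 0 * ((w 0)^-1 * ((a + c * 0) * (- (S + 0) ^- 2 * (0 + 1)) + (S + 0)^-1 * (0 + c * 1))) + ln (w 0) * ((a + c * 0) * (- (S + 0) ^- 2 * (0 + 1)) + (S + 0)^-1 * (0 + c * 1)) = (ln (a / S) + 1) * ((c * S - a) / S ^+ 2)).
  rewrite (wE 0) mulr0 !addr0 !add0r !mulr1.
  have Sn : S != 0 by rewrite gt_eqF.
  have an : a / S != 0 by rewrite mulf_neq0 ?invr_eq0 ?gt_eqF.
  rewrite (mulrA (a / S)) mulfV // mul1r. field. done.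
apply: is_derive_ext h7 => t. by [].
Qed.


Lemma dH_val s (z : 'I_s -> R) (k : 'I_s) : (forall j, 0 <= z j) ->
  0 < \sum_(j < s) z j -> 0 < z k ->
  dH z k = - \sum_(i < s) (ln (z i / \sum_(j < s) z j) + 1) *
      (((i == k)%:R * \sum_(j < s) z j - z i) / (\sum_(j < s) z j) ^+ 2).
Proof.
move=> z0 S0 zk0; set S := \sum_(j < s) z j in S0 *.
pose h (i : 'I_s) := fun t : R => (z i + (i == k)%:R * t) / (S + t) * ln ((z i + (i == k)%:R * t) / (S + t)).
have eqF : (fun t : R => entropyH (fun j => z j + (if j == k then t else 0))) = (fun t => - \sum_(i < s) h i t).
  apply/funext => t; rewrite /entropyH.
  have -> : \sum_(j < s) (z j + (if j == k then t else 0)) = S + t.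
    rewrite big_split /=; congr (_ + _).
    by rewrite (bigD1 k) //= eqxx big1 ?addr0 // => j /negbTE ->.
  congr (- _); apply: eq_bigr => i _; rewrite xlnxE /h.
  by case: eqP => _; rewrite ?mul1r ?mul0r.
rewrite /dH derive1E eqF.
have Hd : forall i, is_derive (0:R) (1:R) (h i) ((ln (z i / S) + 1) * (((i == k)%:R * S - z i) / S ^+ 2)).
  move=> i.
  have [zi0|zi0] := eqVneq (z i) 0.
    have [ik|ik] := eqVneq i k; first by move: zk0; rewrite -ik zi0 ltxx.
    rewrite zi0 !mul0r subr0 mul0r mulr0.
    have Hc : is_derive (0:R) (1:R) (fun _ : R => 0 : R) 0 by exact: is_derive_cst.
    apply: is_derive_ext Hc => t.
    by rewrite /h zi0 (negbTE ik) mul0r addr0 mul0r mul0r.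
  have zp : 0 < z i by rewrite lt_neqAle eq_sym zi0 z0.
  exact: term_derive.
have := is_deriveN (is_derive_sum Hd).
move=> H.
have H' : is_derive (0:R) (1:R) (fun t : R => - \sum_(i < s) h i t)
  (- \sum_(i < s) (ln (z i / S) + 1) * (((i == k)%:R * S - z i) / S ^+ 2)).
  by apply: is_derive_ext H => t; rewrite fct_sumE.
by have [_ ->] := H'.
Qed.

Lemma dH_form s (z : 'I_s -> R) (k : 'I_s) : (forall j, 0 <= z j) ->
  0 < \sum_(j < s) z j -> 0 < z k ->
  dH z k = (\sum_(i < s) z i * (ln (z i / \sum_(j < s) z j) - ln (z k / \sum_(j < s) z j)))
            / (\sum_(j < s) z j) ^+ 2.
Proof.
move=> z0 S0 zk0; rewrite dH_val //; set S := \sum_(j < s) z j in S0 *.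
have A : \sum_(i < s) (ln (z i / S) + 1) * (((i == k)%:R * S - z i) / S ^+ 2) =
   (\sum_(i < s) (ln (z i / S) + 1) * (i == k)%:R * S - \sum_(i < s) (ln (z i / S) + 1) * z i) / S ^+ 2.
  rewrite mulrBl !mulr_suml -sumrB; apply: eq_bigr => i _; ring.
have B : \sum_(i < s) (ln (z i / S) + 1) * (i == k)%:R * S = (ln (z k / S) + 1) * S.
  rewrite (bigD1 k) //= eqxx mulr1 big1 ?addr0 // => i /negbTE ->.
  by rewrite mulr0 mul0r.
have C : \sum_(i < s) z i * (ln (z i / S) - ln (z k / S)) = \sum_(i < s) (ln (z i / S) + 1) * z i - (ln (z k / S) + 1) * S.
  rewrite /S mulr_sumr -sumrB; apply: eq_bigr => i _; ring.
by rewrite A B C -mulNr opprB.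
Qed.
End S.

Theorem corollary2 (R : realType) (s : nat) (eta : R) (z : 'I_s -> R) :
  (2 <= s)%N -> 0 < eta ->
  (forall j, 0 <= z j) -> 0 < \sum_(j < s) z j ->
  (exists a b, [/\ z a != 0, z b != 0 & z a != z b]) ->
  (forall i : 'I_s, z i != 0 -> (forall j, z j != 0 -> z i <= z j) ->
     (0 < gradH z i)%E /\ ztilde eta z i < z i) /\
  (forall k : 'I_s, (forall j, z j <= z k) ->
     (gradH z k < 0)%E /\ z k < ztilde eta z k).
Proof.
move=> _ eta0 z0 S0 [a [b [za zb zab]]].
set S := \sum_(j < s) z j in S0.
have zpos j : z j != 0 -> 0 < z j by move=> h; rewrite lt_neqAle eq_sym h z0.
have Sinv : 0 < S^-1 by rewrite invr_gt0.
have pp j : z j != 0 -> 0 < z j / S by move=> h; rewrite divr_gt0 // zpos.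
have other v : exists j, z j != 0 /\ z j != v.
  have [av|av] := eqVneq (z a) v; last by exists a.
  by exists b; split => //; rewrite -av eq_sym.
split.
- move=> i zi imin; have zi0 := zpos i zi.
  have Hd : 0 < dH z i.
    rewrite dH_form // -/S; apply: divr_gt0; last by rewrite exprn_gt0.
    have [j0 [zj0 zj0i]] := other (z i).
    rewrite (bigD1 j0) //=; apply: (lt_le_trans (y := z j0 * (ln (z j0 / S) - ln (z i / S)))).
      rewrite pmulr_rgt0 ?zpos // subr_gt0 ltr_ln ?posrE ?pp // ltr_pM2r //.
      by rewrite lt_neqAle eq_sym zj0i imin.
    rewrite lerDl; apply: sumr_ge0 => j _.
    have [zj|zj] := eqVneq (z j) 0; first by rewrite zj mul0r.
    rewrite mulr_ge0 ?z0 // subr_ge0 ler_ln ?posrE ?pp // ler_pM2r //.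
    exact: imin.
  split; first by rewrite /gradH zi0 lte_fin.
  rewrite /ztilde (negbTE zi) gt_max zi0 andbT.
  by rewrite ltrBlDr ltrDl mulr_gt0.
- move=> k kmax.
  have zk0 : 0 < z k.
    rewrite lt_neqAle z0 andbT eq_sym; apply/negP => /eqP zk.
    have : S = 0 by rewrite /S big1 // => j _; apply/le_anti; rewrite z0 -zk kmax.
    by move=> S00; move: S0; rewrite S00 ltxx.
  have Hd : dH z k < 0.
    rewrite dH_form // -/S pmulr_llt0; last by rewrite invr_gt0 exprn_gt0.
    have [j0 [zj0 zj0k]] := other (z k).
    rewrite (bigD1 j0) //=; apply: (le_lt_trans (y := z j0 * (ln (z j0 / S) - ln (z k / S)))).
      rewrite gerDl; apply: sumr_le0 => j _.
      have [zj|zj] := eqVneq (z j) 0; first by rewrite zj mul0r.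
      rewrite pmulr_rle0 ?zpos // subr_le0 ler_ln ?posrE ?pp //; first by rewrite ler_pM2r // kmax.
      by rewrite gt_eqF.
    rewrite pmulr_rlt0 ?zpos // subr_lt0 ltr_ln ?posrE ?pp //; last by rewrite gt_eqF.
    by rewrite ltr_pM2r // lt_neqAle zj0k kmax.
  split; first by rewrite /gradH zk0 lte_fin.
  rewrite /ztilde gt_eqF // lt_max.
  apply/orP; left. by rewrite ltrDl -mulrN pmulr_rgt0 // oppr_gt0.
Qed.
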